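(* For every real $c<1$ there exist an infinite binary sequence $\omega=\omega_1\omega_2\omega_3\dots$ and a constant $d$ such that every finite substring $x=\omega_i\omega_{i+1}\dots\omega_j$ of $\omega$ satisfies $K(x)\ge c\,\|x\|-d$. *)

(* Defs.v *)
From Stdlib Require Import Reals List Arith.
Import ListNotations.
Open Scope R_scope.

Inductive prf : Type :=
| PZero : prf
| PSucc : prf
| PProj : nat -> prf
| PComp : prf -> list prf -> prf
| PRec  : prf -> prf -> prf
| PMin  : prf -> prf.

Inductive eval : prf -> list nat -> nat -> Prop :=
| eZero v : eval PZero v 0
| eSucc x v : eval PSucc (x :: v) (S x)
| eProj i v : (i < length v)%nat -> eval (PProj i) v (nth i v 0%nat)
| eComp f gs v ys y : evals gs v ys -> eval f ys y -> eval (PComp f gs) v y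
| eRec0 f g v y : eval f v y -> eval (PRec f g) (0%nat :: v) y
| eRecS f g n v y z :
    eval (PRec f g) (n :: v) y -> eval g (n :: y :: v) z ->
    eval (PRec f g) (S n :: v) z
| eMin f v n :
    eval f (n :: v) 0%nat ->
    (forall m, (m < n)%nat -> exists k, eval f (m :: v) (S k)) ->
    eval (PMin f) v n
with evals : list prf -> list nat -> list nat -> Prop :=
| esNil v : evals [] v []
| esCons g gs v y ys : eval g v y -> evals gs v ys -> evals (g :: gs) v (y :: ys).

(** Binary strings and their standard bijective encoding into nat:
    [] -> 0, b :: s -> 2 * code s + 1 + b. *)
Definition bstring := list bool.

Fixpoint code (s : bstring) : nat :=
  match s with
  | [] => 0%nat
  | b :: s' => (2 * code s' + 1 + (if b then 1 else 0))%nat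
  end.

Definition decomp (f : prf) (p x : bstring) : Prop := eval f [code p] (code x).

Definition optimal (U : prf) : Prop :=
  forall g : prf, exists c : nat, forall p x : bstring,
    decomp g p x -> exists q, decomp U q x /\ (length q <= length p + c)%nat.

Definition substring (w : nat -> bool) (i j : nat) : bstring :=
  map w (seq i (S (j - i))).

(* Main.v *)
Require Import Defs.
From Stdlib Require Import Reals List Arith Lia Lra ClassicalDescription FinFun Classical.
Import ListNotations.
Open Scope R_scope.

Fixpoint eval_det f v y (D : eval f v y) {struct D} : forall y', eval f v y' -> y = y'
with evals_det gs v ys (D : evals gs v ys) {struct D} : forall ys', evals gs v ys' -> ys = ys'.
Proof.
  - destruct D as [| | | | | |f0 v0 n e e0]; intros y' D'; inversion D'; subst; try reflexivity.
    + assert (ys = ys0) by (eapply evals_det; eassumption). subst.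
      eapply eval_det; eassumption.
    + eapply eval_det; eassumption.
    + assert (y = y0) by (eapply eval_det; eassumption). subst.
      eapply eval_det; eassumption.
    + destruct (lt_eq_lt_dec n y') as [[Hl|He]|Hl].
      * destruct (H1 n Hl) as [k Hk].
        pose proof (eval_det _ _ _ e _ Hk) as HH. discriminate HH.
      * exact He.
      * destruct (e0 y' Hl) as [k Hk].
        pose proof (eval_det _ _ _ Hk _ H0) as HH. discriminate HH.
  - destruct D; intros ys' D'; inversion D'; subst; try reflexivity.
    f_equal; [eapply eval_det | eapply evals_det]; eassumption.
Qed.

Lemma code_inj : forall s t, code s = code t -> s = t.
Proof.
  induction s as [|a s IH]; destruct t as [|b t]; simpl; intros H.
  - reflexivity.
  - exfalso; destruct b; simpl in H; lia.
  - exfalso; destruct a; simpl in H; lia.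
  - assert (a = b /\ code s = code t) as [-> E].
    { destruct a, b; simpl in H; split; (reflexivity || lia || (exfalso; lia)). }
    rewrite (IH _ E). reflexivity.
Qed.

Definition ext (l : list bstring) : list bstring :=
  map (cons false) l ++ map (cons true) l.

Lemma ext_len l : length (ext l) = (2 * length l)%nat.
Proof. unfold ext. rewrite length_app, !length_map. unfold bstring in *; lia. Qed.

Lemma ext_in l x : In x (ext l) <-> exists b y, x = b :: y /\ In y l.
Proof.
  unfold ext. rewrite in_app_iff, !in_map_iff. split.
  - intros [[y [<- H]]|[y [<- H]]]; eauto.
  - intros [b [y [-> H]]]. destruct b; [right|left]; eauto.
Qed.

Lemma ext_nodup l : NoDup l -> NoDup (ext l).
Proof.
  intros H. unfold ext. apply NoDup_app.
  - apply Injective_map_NoDup; auto. intros a b E; now inversion E.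
  - apply Injective_map_NoDup; auto. intros a b E; now inversion E.
  - intros a H1 H2. apply in_map_iff in H1, H2.
    destruct H1 as [? [<- _]]. destruct H2 as [? [E _]]. discriminate.
Qed.

Fixpoint strs (n : nat) : list bstring :=
  match n with O => [[]] | S n => ext (strs n) end.

Lemma strs_len n : length (strs n) = (2 ^ n)%nat.
Proof. induction n; simpl; auto. rewrite ext_len, IHn. lia. Qed.

Lemma strs_in n s : In s (strs n) <-> length s = n.
Proof.
  revert s; induction n; intros s; simpl.
  - split; [intros [<-|[]]; auto | destruct s; simpl; auto; discriminate].
  - rewrite ext_in. split.
    + intros [b [y [-> H]]]. simpl. f_equal. now apply IHn.
    + destruct s as [|b y]; simpl; intros H; [discriminate|].
      exists b, y; split; auto. apply IHn; lia.
Qed.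

Lemma strs_nodup n : NoDup (strs n).
Proof. induction n; simpl. constructor; auto. constructor. now apply ext_nodup. Qed.

Definition dec (P : Prop) : bool := if excluded_middle_informative P then true else false.
Lemma dec_iff P : dec P = true <-> P.
Proof. unfold dec; destruct excluded_middle_informative; split; auto; discriminate. Qed.
Lemma dec_false P : dec P = false <-> ~ P.
Proof. unfold dec; destruct excluded_middle_informative; split; auto; try discriminate; tauto. Qed.

Lemma filter_split {A} (p : A -> bool) l :
  length l = (length (filter p l) + length (filter (fun x => negb (p x)) l))%nat.
Proof. induction l; simpl; auto. destruct (p a); simpl; lia. Qed.

Lemma inj_len {A B} (dB : forall x y : B, {x = y} + {x <> y}) (R : A -> B -> Prop)
  (l : list A) (m : list B) :
  NoDup l -> (forall x, In x l -> exists y, In y m /\ R x y) ->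
  (forall x x' y, R x y -> R x' y -> x = x') -> (length l <= length m)%nat.
Proof.
  revert m; induction l as [|x l IH]; intros m Hn Hex Hf; simpl; [lia|].
  inversion Hn; subst.
  destruct (Hex x (or_introl eq_refl)) as [y [Hy Rxy]].
  assert (length l <= length (remove dB y m))%nat.
  { apply IH; auto.
    intros x' Hx'. destruct (Hex x' (or_intror Hx')) as [y' [Hy' R']].
      exists y'. split; auto. apply in_in_remove; auto.
      intros ->. pose proof (Hf _ _ _ R' Rxy). subst. contradiction. }
  pose proof (remove_length_lt dB m y Hy). lia.
Qed.
Definition good (Fb : bstring -> Prop) (y : bstring) : Prop :=
  forall a z b, y = a ++ z ++ b -> ~ Fb z.
Definition Fl Fb k := filter (fun z => dec (Fb z)) (strs k).
Definition Gl Fb k := filter (fun y => dec (good Fb y)) (strs k).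
Definition prodapp (L M : list bstring) : list bstring :=
  flat_map (fun z => map (fun c => z ++ c) M) L.
Definition BL Fb n :=
  flat_map (fun k => prodapp (Fl Fb (S k)) (Gl Fb (n - k))) (seq 0 (S n)).

Lemma good_suffix Fb s r : good Fb (s ++ r) -> good Fb r.
Proof. intros H a z b E Hz. apply (H (s ++ a) z b); auto. rewrite E, app_assoc. reflexivity. Qed.

Lemma In_Gl Fb k y : In y (Gl Fb k) <-> length y = k /\ good Fb y.
Proof. unfold Gl. rewrite filter_In, strs_in, dec_iff. tauto. Qed.
Lemma In_Fl Fb k y : In y (Fl Fb k) <-> length y = k /\ Fb y.
Proof. unfold Fl. rewrite filter_In, strs_in, dec_iff. tauto. Qed.

Lemma prodapp_in L M z c : In z L -> In c M -> In (z ++ c) (prodapp L M).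
Proof. intros. unfold prodapp. apply in_flat_map. exists z. split; auto. apply in_map. auto. Qed.

Lemma prodapp_len L M : length (prodapp L M) = (length L * length M)%nat.
Proof. unfold prodapp; unfold bstring in *. induction L; simpl; auto. rewrite length_app, length_map, IHL. reflexivity. Qed.

Lemma bad_in_BL Fb n y b : ~ Fb [] -> In y (Gl Fb n) -> ~ good Fb (b :: y) ->
  In (b :: y) (BL Fb n).
Proof.
  intros H0 Hy Hng. apply In_Gl in Hy. destruct Hy as [Hl Hg].
  destruct (classic (exists a z c, b :: y = a ++ z ++ c /\ Fb z)) as [Hex|Hex].
  2:{ exfalso. apply Hng. intros a z c E Fz. apply Hex. eauto. }
  destruct Hex as [a [z [c [E Fz]]]].
  destruct a as [|a0 a'].
  - destruct z as [|z0 z']; [contradiction|].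
    simpl in E. inversion E; subst.
    unfold BL. apply in_flat_map. exists (length z').
    rewrite length_app in *. split.
    + apply in_seq. unfold bstring in *; lia.
    + replace (z0 :: z' ++ c) with ((z0 :: z') ++ c) by reflexivity.
      apply prodapp_in.
      * apply In_Fl. split; auto.
      * apply In_Gl. split. unfold bstring in *; lia.
        apply (good_suffix Fb z'). auto.
  - simpl in E. inversion E; subst. exfalso. apply (Hg a' z c); auto.
Qed.

Lemma count Fb n : ~ Fb [] ->
  (2 * length (Gl Fb n) <= length (Gl Fb (S n)) + length (BL Fb n))%nat.
Proof.
  intros H0. rewrite <- ext_len.
  rewrite (filter_split (fun y => dec (good Fb y)) (ext (Gl Fb n))).
  assert (ND : NoDup (ext (Gl Fb n))) by (apply ext_nodup, NoDup_filter, strs_nodup).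
  apply Nat.add_le_mono.
  - apply NoDup_incl_length. apply NoDup_filter; auto.
    intros x Hx. apply filter_In in Hx. destruct Hx as [Hx Hg].
    apply ext_in in Hx. destruct Hx as [b [y [-> Hy]]].
    apply In_Gl in Hy. apply In_Gl. split. simpl; f_equal; tauto. apply dec_iff. auto.
  - apply NoDup_incl_length. apply NoDup_filter; auto.
    intros x Hx. apply filter_In in Hx. destruct Hx as [Hx Hg].
    apply ext_in in Hx. destruct Hx as [b [y [-> Hy]]].
    apply bad_in_BL; auto. apply Bool.negb_true_iff, dec_false in Hg. auto.
Qed.

Fixpoint rsum (f : nat -> R) (n : nat) : R :=
  match n with O => 0 | S n => rsum f n + f n end.

Lemma flat_map_seq_len {A} (g : nat -> list A) m :
  INR (length (flat_map g (seq 0 m))) = rsum (fun k => INR (length (g k))) m.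
Proof.
  induction m; [reflexivity|].
  rewrite seq_S, flat_map_app, length_app, plus_INR, IHm. cbn [rsum flat_map].
  rewrite app_nil_r. reflexivity.
Qed.

Lemma BL_len Fb n : INR (length (BL Fb n)) =
  rsum (fun k => INR (length (Fl Fb (S k))) * INR (length (Gl Fb (n - k)))) (S n).
Proof.
  unfold BL. rewrite flat_map_seq_len. 
  assert (forall m, rsum (fun k => INR (length (prodapp (Fl Fb (S k)) (Gl Fb (n - k))))) m =
     rsum (fun k => INR (length (Fl Fb (S k))) * INR (length (Gl Fb (n - k)))) m) as E.
  { induction m; simpl; auto. rewrite IHm, prodapp_len, mult_INR. reflexivity. }
  apply E.
Qed.

Lemma Gl0 Fb : ~ Fb [] -> length (Gl Fb 0) = 1%nat.
Proof.
  intros H. unfold Gl. simpl. 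
  assert (good Fb []) as Hg.
  { intros a z b E. destruct a, z; try discriminate; auto. }
  apply dec_iff in Hg. rewrite Hg. reflexivity.
Qed.

Lemma rsum_mono g h m : (forall k, (k < m)%nat -> g k <= h k) -> rsum g m <= rsum h m.
Proof.
  induction m; simpl; intros H; [lra|].
  apply Rplus_le_compat; auto.
Qed.

Lemma rsum_ext g h m : (forall k, (k < m)%nat -> g k = h k) -> rsum g m = rsum h m.
Proof.
  induction m; simpl; intros H; [lra|].
  rewrite IHm, H; auto.
Qed.

Lemma rsum_scale C g m : rsum (fun k => C * g k) m = C * rsum g m.
Proof. induction m; simpl; [ring|]. rewrite IHm. ring. Qed.

Lemma geom r n : rsum (fun k => r ^ (S k)) n * (1 - r) = r - r ^ (S n).
Proof. induction n; cbn [rsum]; [simpl; ring|]. rewrite Rmult_plus_distr_r, IHn. simpl. ring. Qed.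

Lemma geom_le r n : 0 <= r < 1 -> rsum (fun k => r ^ (S k)) n <= r / (1 - r).
Proof.
  intros Hr. pose proof (geom r n) as E.
  assert (0 <= r ^ S n) by (apply pow_le; lra).
  apply (Rmult_le_reg_r (1 - r)); [lra|]. rewrite E.
  unfold Rdiv. rewrite Rmult_assoc, Rinv_l by lra. lra.
Qed.

Lemma growth (a f : nat -> R) (B mu lam : R) :
  a 0%nat = 1 -> (forall n, 0 <= a n) -> (forall k, 0 <= f k) ->
  (forall k, f k <= B * mu ^ k) -> 1 < lam -> 0 < mu ->
  (forall n, lam * B * rsum (fun k => (mu / lam) ^ (S k)) n <= 2 - lam) ->
  (forall n, 2 * a n <= a (S n) + rsum (fun k => f (S k) * a (n - k)%nat) (S n)) ->
  forall n, 0 < a n.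
Proof.
  intros a0 apos fpos fB Hlam Hmu Hc Hrec.
  assert (Q : forall n i, (i <= n)%nat -> a (n - i)%nat * lam ^ i <= a n).
  { induction n as [|n IH]; intros i Hi.
    - replace i with 0%nat by lia. simpl. lra.
    - assert (Step : lam * a n <= a (S n)).
      { assert (S1 : rsum (fun k => f (S k) * a (n - k)%nat) (S n) <=
                    a n * (lam * B * rsum (fun k => (mu / lam) ^ (S k)) (S n))).
        { rewrite <- !rsum_scale. apply rsum_mono. intros k Hk.
          assert (A1 : a (n - k)%nat <= a n * (/ lam) ^ k).
          { pose proof (IH k ltac:(lia)) as Hk'.
            assert (0 < lam ^ k) by (apply pow_lt; lra).
            rewrite pow_inv. apply (Rmult_le_reg_r (lam ^ k)); auto.
            rewrite Rmult_assoc, Rinv_l by lra. lra. }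
          assert (E : a n * (lam * B * (mu / lam) ^ S k) = B * mu ^ (S k) * (a n * (/ lam) ^ k)).
          { unfold Rdiv. rewrite Rpow_mult_distr. simpl. field. lra. }
          rewrite E. apply Rmult_le_compat; auto. }
        specialize (Hrec n). specialize (Hc (S n)).
        assert (a n * (lam * B * rsum (fun k => (mu / lam) ^ S k) (S n)) <= a n * (2 - lam)).
        { apply Rmult_le_compat_l; auto. }
        nra. }
      destruct i as [|i].
      + replace (S n - 0)%nat with (S n) by lia. simpl. lra.
      + simpl (S n - S i)%nat. pose proof (IH i ltac:(lia)).
        simpl. assert (0 < lam) by lra. nra. }
  intros n. pose proof (Q n n (le_n n)) as H. rewrite Nat.sub_diag, a0 in H.
  assert (0 < lam ^ n) by (apply pow_lt; lra). lra.
Qed.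

Definition Ext (P : bstring -> Prop) (r : bstring) : Prop :=
  forall m, exists s, length s = m /\ P (s ++ r).

Lemma Ext_step P r : (forall s r, P (s ++ r) -> P r) -> Ext P r ->
  Ext P (true :: r) \/ Ext P (false :: r).
Proof.
  intros Hsuf HE. apply NNPP. intros Hn.
  apply not_or_and in Hn. destruct Hn as [H1 H2].
  apply not_all_ex_not in H1. destruct H1 as [m1 H1].
  apply not_all_ex_not in H2. destruct H2 as [m2 H2].
  destruct (HE (S (m1 + m2))) as [s [Hs HP]].
  destruct (rev s) as [|b s0] eqn:Er.
  { apply (f_equal (@length bool)) in Er. rewrite length_rev in Er. simpl in Er.
    unfold bstring in *; lia. }
  assert (Es : s = rev s0 ++ [b]).
  { rewrite <- (rev_involutive s), Er. reflexivity. }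
  assert (Hl : length (rev s0) = (m1 + m2)%nat).
  { rewrite Es, length_app in Hs. simpl in Hs. unfold bstring in *; lia. }
  rewrite Es, <- app_assoc in HP. simpl in HP.
  set (t := rev s0) in *.
  destruct b.
  - apply H1. exists (skipn m2 t). split.
    + rewrite length_skipn. unfold bstring in *; lia.
    + apply (Hsuf (firstn m2 t)). rewrite app_assoc, firstn_skipn. exact HP.
  - apply H2. exists (skipn m1 t). split.
    + rewrite length_skipn. unfold bstring in *; lia.
    + apply (Hsuf (firstn m1 t)). rewrite app_assoc, firstn_skipn. exact HP.
Qed.

Definition next (P : bstring -> Prop) (r : bstring) : bstring :=
  if dec (Ext P (true :: r)) then true :: r else false :: r.

Fixpoint rs P (n : nat) : bstring :=
  match n with O => [] | S n => next P (rs P n) end.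

Lemma konig (P : bstring -> Prop) :
  (forall s r, P (s ++ r) -> P r) -> (forall m, exists y, length y = m /\ P y) ->
  exists w : nat -> bool, forall n, P (rev (map w (seq 0 n))).
Proof.
  intros Hsuf Hall.
  assert (HE : forall n, Ext P (rs P n)).
  { induction n; simpl.
    - intros m. destruct (Hall m) as [y [Hy HP]]. exists y. rewrite app_nil_r. auto.
    - unfold next. destruct (dec (Ext P (true :: rs P n))) eqn:Ed.
      + rewrite dec_iff in Ed. auto.
      + rewrite dec_false in Ed. destruct (Ext_step P _ Hsuf IHn); tauto. }
  set (w := fun n => hd false (rs P (S n))).
  assert (Hrs : forall n, rs P (S n) = w n :: rs P n).
  { intros n. unfold w. simpl. unfold next. destruct (dec _); reflexivity. }
  assert (Hrev : forall n, rs P n = rev (map w (seq 0 n))).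
  { induction n; [reflexivity|].
    rewrite Hrs, seq_S, map_app, rev_app_distr, IHn. reflexivity. }
  exists w. intros n. rewrite <- Hrev.
  destruct (HE n 0%nat) as [s [Hs HP]]. destruct s; [exact HP|discriminate].
Qed.

Lemma INR2 : INR 2 = 2.
Proof. simpl. ring. Qed.

Lemma sum_bound k' (q : nat -> bool) Y : 0 < Y -> (forall l, q l = true -> 2 ^ l < Y) ->
  INR (length (flat_map strs (filter q (seq 0 k')))) + 1 <= 2 ^ k' /\
  INR (length (flat_map strs (filter q (seq 0 k')))) <= 2 * Y.
Proof.
  intros HY Hq. induction k' as [|k' IH].
  - simpl. lra.
  - rewrite seq_S, filter_app, flat_map_app, length_app, plus_INR. simpl (0 + k')%nat.
    cbn [filter]. destruct (q k') eqn:Eq.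
    + cbn [flat_map]. rewrite app_nil_r, strs_len, pow_INR, INR2.
      pose proof (Hq k' Eq). simpl. lra.
    + cbn [flat_map length]. simpl INR. simpl pow.
      assert (0 < 2 ^ k') by (apply pow_lt; lra). lra.
Qed.

Lemma Rpower_pos x y : 0 < Rpower x y.
Proof. unfold Rpower. apply exp_pos. Qed.

Lemma pow2_ge n : INR n <= 2 ^ n.
Proof.
  induction n; [simpl; lra|]. rewrite S_INR. simpl pow.
  assert (1 <= 2 ^ n) by (apply pow_R1_Rle; lra). lra.
Qed.

Theorem lemma1 :
  forall U : prf, optimal U ->
  forall c : R, c < 1 ->
  exists (w : nat -> bool) (d : R),
    forall (i j : nat) (p : bstring), (i <= j)%nat ->
      decomp U p (substring w i j) ->
      INR (length p) >= c * INR (length (substring w i j)) - d.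
Proof.
  intros U _ c Hc.
  set (mu := Rpower 2 c).
  assert (Hmu0 : 0 < mu) by apply Rpower_pos.
  assert (Hmu2 : mu < 2).
  { unfold mu. rewrite <- (Rpower_1 2) at 2 by lra. apply Rpower_lt; lra. }
  set (lam := (mu + 2) / 2).
  assert (Hlam1 : 1 < lam) by (unfold lam; lra).
  assert (Hlam2 : lam < 2) by (unfold lam; lra).
  set (rho := mu / lam).
  assert (Hrho : 0 < rho < 1).
  { unfold rho. split. apply Rdiv_lt_0_compat; lra.
    apply (Rmult_lt_reg_r lam); [lra|]. unfold Rdiv. rewrite Rmult_assoc, Rinv_l by lra.
    unfold lam. lra. }
  set (Qr := rho / (1 - rho)).
  assert (HQ : 0 <= Qr) by (unfold Qr; apply Rlt_le, Rdiv_lt_0_compat; lra).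
  destruct (INR_archimed 1 (2 * lam * Qr / (2 - lam))) as [N HN]; [lra|].
  rewrite Rmult_1_r in HN.
  set (d := INR N).
  assert (Hd : 0 <= d) by apply pos_INR.
  set (P2 := 2 ^ N).
  assert (HP2 : 0 < P2) by (apply pow_lt; lra).
  set (B := 2 * / P2).
  assert (HK : lam * B * Qr <= 2 - lam).
  { pose proof (pow2_ge N) as H2. fold P2 in H2.
    assert (2 * lam * Qr < (2 - lam) * P2).
    { assert (E : 2 * lam * Qr = (2 * lam * Qr / (2 - lam)) * (2 - lam)) by (field; lra).
      rewrite E, (Rmult_comm (2 - lam) P2). apply Rmult_lt_compat_r; lra. }
    unfold B. apply (Rmult_le_reg_r P2); auto.
    replace (lam * (2 * / P2) * Qr * P2) with (2 * lam * Qr) by (field; lra). lra. }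
  set (Fb := fun z : bstring => exists p, decomp U p (rev z) /\
                 INR (length p) < c * INR (length z) - d).
  assert (HF0 : ~ Fb []).
  { intros [p [_ Hp]]. simpl in Hp. pose proof (pos_INR (length p)). lra. }
  assert (HFb : forall k, INR (length (Fl Fb k)) <= B * mu ^ k).
  { intros k.
    set (X := c * INR k - d).
    set (m := flat_map strs (filter (fun l => dec (INR l < X)) (seq 0 k))).
    assert (Hlen : (length (Fl Fb k) <= length m)%nat).
    { apply (inj_len (list_eq_dec Bool.bool_dec) (fun z p => decomp U p (rev z))).
      - apply NoDup_filter, strs_nodup.
      - intros z Hz. apply In_Fl in Hz. destruct Hz as [Hzl [p [Hp Hpl]]].
        exists p. split; auto. unfold m. apply in_flat_map. exists (length p).
        split; [|apply strs_in; reflexivity].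
        apply filter_In. split; [|apply dec_iff; rewrite Hzl in Hpl; exact Hpl].
        apply in_seq. split; [lia|]. simpl.
        rewrite Hzl in Hpl. apply INR_lt.
        assert (c * INR k <= INR k).
        { pose proof (pos_INR k). nra. }
        fold X in Hpl. unfold X in Hpl. lra.
      - intros x x' p H1 H2. unfold decomp in H1, H2.
        pose proof (eval_det _ _ _ H1 _ H2) as E. apply code_inj in E.
        rewrite <- (rev_involutive x), E, rev_involutive. reflexivity. }
    apply le_INR in Hlen.
    destruct (sum_bound k (fun l => dec (INR l < X)) (Rpower 2 X)) as [_ Hs].
    - apply Rpower_pos.
    - intros l Hl. rewrite dec_iff in Hl. rewrite <- Rpower_pow by lra.
      apply Rpower_lt; lra.
    - fold m in Hs.
      assert (E : Rpower 2 X = mu ^ k * / P2).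
      { unfold X, mu, P2, d. unfold Rminus. rewrite Rpower_plus, Rpower_Ropp.
        rewrite Rpower_pow by lra. rewrite <- Rpower_mult, Rpower_pow by apply Rpower_pos.
        try reflexivity. }
      rewrite E in Hs. unfold B. lra. }
  assert (Hpos : forall n, 0 < INR (length (Gl Fb n))).
  { apply (growth (fun n => INR (length (Gl Fb n))) (fun k => INR (length (Fl Fb k))) B mu lam).
    - rewrite Gl0; auto.
    - intros; apply pos_INR.
    - intros; apply pos_INR.
    - exact HFb.
    - exact Hlam1.
    - exact Hmu0.
    - intros n. fold rho. pose proof (geom_le rho n ltac:(lra)) as G. fold Qr in G.
      assert (0 <= lam * B).
      { unfold B. apply Rmult_le_pos; [lra|]. apply Rmult_le_pos; [lra|].
        apply Rlt_le, Rinv_0_lt_compat; auto. }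
      apply Rle_trans with (lam * B * Qr); auto. apply Rmult_le_compat_l; auto.
    - intros n. pose proof (count Fb n HF0) as Hc'. apply le_INR in Hc'.
      rewrite plus_INR, mult_INR, INR2, BL_len in Hc'. exact Hc'. }
  assert (Hall : forall m, exists y, length y = m /\ good Fb y).
  { intros m. specialize (Hpos m). destruct (Gl Fb m) as [|y l] eqn:E.
    - simpl in Hpos. lra.
    - exists y. apply In_Gl. rewrite E. left; reflexivity. }
  destruct (konig (good Fb) (good_suffix Fb) Hall) as [w Hw].
  exists w, d. intros i j p Hij Hp.
  specialize (Hw (S j)).
  replace (S j) with (i + S (j - i))%nat in Hw by lia.
  rewrite seq_app, map_app, rev_app_distr in Hw. simpl (0 + i)%nat in Hw.
  assert (Hn : ~ Fb (rev (substring w i j))).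
  { apply (Hw [] _ (rev (map w (seq 0 i)))). reflexivity. }
  apply Rnot_lt_ge. intros Hlt. apply Hn. exists p.
  rewrite rev_involutive, length_rev. auto.
Qed.
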